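(* Let $\mathcal{X}$ be an instance space and $\mathcal{Y}$ a finite label set. Let $\hat f:\mathcal{X}\to\mathbb{P}(\mathcal{Y})$ be a fixed probabilistic classifier (independent of the data below), writing $\hat f(x)_y$ for the probability of label $y$ at $x$. Let $(x_j,y_j)$, $j\in\mathcal{I}_2$, be calibration points, each observed only through a candidate set $S_j\subseteq\mathcal{Y}$ with $y_j\in S_j$, and let $(x_{new},y_{new})$ be a test point. Define the multiset $$\mathcal{E}_{\mathrm{mean}}:=\Big\{\,1-\frac{\sum_{y\in S_j}\hat f(x_j)_y}{|S_j|}: j\in\mathcal{I}_2\Big\}.$$ If the points $\{(x_j,y_j):j\in\mathcal{I}_2\}\cup\{(x_{new},y_{new})\}$ are exchangeable and $\hat f(x_j)_{y_j}\ge 1/|S_j|$ for all $j\in\mathcal{I}_2$ (with probability one), then for every $\epsilon\in(0,1]$, $$\mathbb{P}\big(y_{new}\in\mathcal{T}(x_{new},\hat f,\mathcal{E}_{\mathrm{mean}},\epsilon)\big)\ge 1-\epsilon .$$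
   Context: For a finite multiset $\mathcal{E}$ of real numbers and $\epsilon\in(0,1]$, the critical score $q(\mathcal{E},\epsilon)$ is the $\lceil(1+|\mathcal{E}|)(1-\epsilon)\rceil$-th smallest element of $\mathcal{E}$ (counted with multiplicity); if this index exceeds $|\mathcal{E}|$, $q(\mathcal{E},\epsilon)$ is taken to be $+\infty$. For $x\in\mathcal{X}$, the prediction set is $\mathcal{T}(x,\hat f,\mathcal{E},\epsilon):=\{y\in\mathcal{Y}:\hat f(x)_y\ge 1-q(\mathcal{E},\epsilon)\}$. ''Valid'' means the coverage bound $\mathbb{P}(y_{new}\in\mathcal{T})\ge 1-\epsilon$. *)

(* Defs.v *)
From HB Require Import structures.
From mathcomp Require Import all_boot all_order all_algebra perm.
From mathcomp Require Import all_classical all_reals all_analysis.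
Set Implicit Arguments. Unset Strict Implicit. Unset Printing Implicit Defensive.
Import Order.TTheory GRing.Theory Num.Theory.
Local Open Scope classical_set_scope.
Local Open Scope ring_scope.

(* Convention for a non-positive index (only possible for eps = 1): -oo. *)
Definition critical_score (R : realType) (E : seq R) (eps : R) : \bar R :=
  let k := Num.ceil ((1 + (size E)%:R) * (1 - eps)) in
  if k <= 0 then -oo%E
  else if (size E < `|k|)%N then +oo%E
  else (nth 0 (sort <=%R E) `|k|.-1)%:E.

Definition conformal_set (R : realType) (X : Type) (Y : finType)
  (f : X -> Y -> R) (x : X) (E : seq R) (eps : R) : {set Y} :=
  [set y : Y | (1%:E - critical_score E eps <= (f x y)%:E)%E].

Definition prob_classifier (R : realType) (X : Type) (Y : finType)
  (f : X -> Y -> R) : Prop :=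
  (forall x y, 0 <= f x y) /\ (forall x, \sum_(y : Y) f x y = 1).

(* Generators of the product sigma-algebra on ('I_m -> X * Y), where X carries
   its sigma-algebra and the finite Y the discrete one. *)
Definition cyl_sets d (X : measurableType d) (Y : finType) (m : nat)
  : set (set ('I_m -> X * Y)) :=
  [set A | exists i B, measurable B /\ A = [set z | B (z i).1]] `|`
  [set A | exists i (c : Y), A = [set z | (z i).2 = c]].

Definition exchangeable d (T : measurableType d) (R : realType)
  (P : probability T R) dX (X : measurableType dX) (Y : finType) (m : nat)
  (x : 'I_m -> T -> X) (y : 'I_m -> T -> Y) : Prop :=
  forall (s : {perm 'I_m}) (A : set ('I_m -> X * Y)),
    <<s @cyl_sets _ X Y m >> A ->
    P [set w | A (fun i => (x (s i) w, y (s i) w))] =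
    P [set w | A (fun i => (x i w, y i w))].

(* The multiset E_mean of the calibration points (indices 0..n-1 of 'I_n.+1). *)
Definition E_mean (R : realType) (X : Type) (Y : finType) (f : X -> Y -> R)
  (n : nat) (xs : 'I_n.+1 -> X) (S : 'I_n -> {set Y}) : seq R :=
  [seq 1 - (\sum_(c in S j) f (xs (widen_ord (leqnSn n) j)) c) / #|S j|%:R
  | j <- enum 'I_n].

(* Main.v *)
Require Import Defs.
From HB Require Import structures.
From mathcomp Require Import all_boot all_order all_algebra perm.
From mathcomp Require Import all_classical all_reals all_analysis.
From mathcomp Require Import zify lra measurable_realfun.
Import Order.TTheory GRing.Theory Num.Theory.
Local Open Scope classical_set_scope.
Local Open Scope ring_scope.

Section OS.
Variable R : realType.

Lemma sort_nth_le (L : seq R) i j : (i <= j < size L)%N ->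
  nth 0 (sort <=%R L) i <= nth 0 (sort <=%R L) j.
Proof.
move=> /andP[hij hj].
have so : sorted <=%R (sort <=%R L) := sort_le_sorted L.
apply: (sorted_leq_nth le_trans lexx 0 so) => //; rewrite inE size_sort //.
exact: leq_ltn_trans hij hj.
Qed.

Lemma os_count (L : seq R) (K : nat) (t : R) : (0 < K <= size L)%N ->
  (t <= nth 0 (sort <=%R L) K.-1) = (count (fun e : R => (e < t)%R) L < K)%N.
Proof.
move=> /andP[K0 KL].
rewrite -(count_sort <=%R).
set L' := sort <=%R L.
have sz : size L' = size L by rewrite size_sort.
have [h|h] := leP t (nth 0 L' K.-1).
- rewrite -(cat_take_drop K.-1 L') count_cat.
  have c1 : (count (fun e : R => (e < t)%R) (take K.-1 L') <= K.-1)%N.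
    apply: leq_trans (count_size _ _) _; rewrite size_take; case: ifP => /= [_|/negbT]; lia.

  have -> : count (fun e : R => (e < t)%R) (drop K.-1 L') = 0%N.
    apply/eqP; rewrite -leqn0 leqNgt -has_count; apply/hasPn => e /(nthP 0) [i hi <-].
    rewrite nth_drop -leNgt; apply: le_trans h _; apply: sort_nth_le.
    rewrite size_drop sz in hi; apply/andP; split; lia.
  apply/esym/idP; rewrite addn0; apply: (leq_ltn_trans c1); by rewrite ltn_predL.
- symmetry; apply/negbTE; rewrite -leqNgt.
  rewrite -(cat_take_drop K L') count_cat.
  have -> : count (fun e : R => (e < t)%R) (take K L') = K.
    have : all (fun e : R => (e < t)%R) (take K L').
      apply/(all_nthP 0) => i; rewrite size_takel ?sz // => hi.
      rewrite nth_take //; apply: le_lt_trans h; apply: sort_nth_le.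
      apply/andP; split; lia.
    by rewrite all_count => /eqP ->; rewrite size_takel ?sz.
  exact: leq_addr.
Qed.

Lemma os_count_ge (L : seq R) (K : nat) : (0 < K <= size L)%N ->
  (K <= count (fun e : R => (e <= nth 0 (sort <=%R L) K.-1)%R) L)%N.
Proof.
move=> /andP[K0 KL].
set q := nth 0 (sort <=%R L) K.-1.
have hq : forall i, (i < K)%N -> nth 0 (sort <=%R L) i <= q.
  move=> i hi; apply: sort_nth_le; apply/andP; split; lia.
rewrite -(count_sort <=%R).
set L' := sort <=%R L.
have sz : size L' = size L by rewrite size_sort.
rewrite -(cat_take_drop K L') count_cat.
have -> : count (fun e : R => (e <= q)%R) (take K L') = K.
  have : all (fun e : R => (e <= q)%R) (take K L').
    apply/(all_nthP 0) => i; rewrite size_takel ?sz // => hi.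
    by rewrite nth_take //; apply: hq.
  by rewrite all_count => /eqP ->; rewrite size_takel ?sz.
exact: leq_addr.
Qed.
End OS.

Section Meas.
Context (R : realType) dM (M : measurableType dM).

Lemma bool_comb_meas (I : finType) (b : I -> M -> bool) (Phi : (I -> bool) -> Prop) :
  (forall i, measurable [set w | b i w]) -> measurable [set w | Phi (fun i => b i w)].
Proof.
move=> mb.
have -> : [set w | Phi (fun i => b i w)] =
   \bigcup_(v in [set v : {ffun I -> bool} | Phi v])
      \bigcap_(i in [set: I]) [set w | b i w = v i].
  apply/seteqP; split => w /=.
  - move=> hw; exists [ffun i => b i w].
      have E : (fun i => b i w) = [ffun i => b i w] by apply/funext => i; rewrite ffunE.
      exact: (eq_ind _ Phi hw _ E).
    by move=> i _ /=; rewrite ffunE.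
  - move=> [v /= Pv Hv].
    have E : (fun i => v i) = (fun i => b i w) by apply/funext => i; rewrite Hv.
    exact: (eq_ind _ Phi Pv _ E).
apply: fin_bigcup_measurable; first exact: finite_finset.
move=> v _; apply: fin_bigcap_measurable; first exact: finite_finset.
move=> i _; case: (v i).
- exact: mb.
- rewrite (_ : [set w | b i w = false] = ~` [set w | b i w]).
    exact/measurableC/mb.
  by apply/seteqP; split => w /=; [move=> -> | move/negP/negbTE].
Qed.

Lemma ltr_meas (g h : M -> R) : measurable_fun setT g -> measurable_fun setT h ->
  measurable [set w | g w < h w].
Proof.
move=> mg mh.
have := measurable_fun_ltr mg mh measurableT (Y := [set true]) I.
by rewrite setTI.
Qed.

Lemma comp_meas dX (X : measurableType dX) (K : finType) (u : M -> X) (v : M -> K)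
  (F : X -> K -> R) :
  (forall B, measurable B -> measurable (u @^-1` B)) ->
  (forall c, measurable [set w | v w = c]) ->
  (forall c, measurable_fun setT (F^~ c)) ->
  measurable_fun setT (fun w => F (u w) (v w)).
Proof.
move=> mu mv mF _ B mB; rewrite setTI.
have -> : (fun w => F (u w) (v w)) @^-1` B =
   \bigcup_(c in [set: K]) ([set w | v w = c] `&` u @^-1` (F^~ c @^-1` B)).
  apply/seteqP; split => w /=.
  - by move=> hw; exists (v w) => //.
  - by move=> [c _ [/= <-]].
apply: fin_bigcup_measurable; first exact: finite_finset.
move=> c _; apply: measurableI; first exact: mv.
apply: mu; have := mF c measurableT B mB; by rewrite setTI.
Qed.
End Meas.

Lemma count_sum (I : finType) (p : pred I) : count p (enum I) = (\sum_(i : I) (p i : nat))%N.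
Proof.
rewrite -sum1_count big_mkcond big_enum /=; apply: eq_bigr => i _; by case: (p i).
Qed.

Definition ptype (U : Type) (u : U) : Type := U.
Section PT.
Variables (U : Type) (u : U).
HB.instance Definition _ := gen_eqMixin (ptype U u).
HB.instance Definition _ := gen_choiceMixin (ptype U u).
HB.instance Definition _ := isPointed.Build (ptype U u) u.
End PT.

Lemma mean_ge (R : realType) (Yf : finType) (g : Yf -> R) (A : {set Yf}) (c : Yf) :
  (forall c, 0 <= g c) -> \sum_c g c = 1 -> c \in A -> #|A|%:R^-1 <= g c ->
  1 - g c <= 1 - (\sum_(c in A) g c) / #|A|%:R.
Proof.
move=> g0 g1 cA hc.
have hs : \sum_(c in A) g c <= 1.
  rewrite -g1 big_mkcond /=; apply: ler_sum => i _; case: ifP => // _; exact: g0.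
have : (\sum_(c in A) g c) / #|A|%:R <= #|A|%:R^-1.
  rewrite -[X in _ <= X]mul1r; apply: ler_wpM2r => //; rewrite invr_ge0; exact: ler0n.
move=> h; lra.
Qed.


Lemma sw1 (R : realType) (a q : R) : (1 - q <= a) = (1 - a <= q).
Proof. by apply/idP/idP => h; lra. Qed.
Arguments comp_meas {R dM M dX X K} u v F.
Arguments bool_comb_meas {dM M I} b Phi.
Arguments ltr_meas {R dM M} g h.

Theorem theorem3 (R : realType) (d : measure_display) (T : measurableType d)
  (P : probability T R) (dX : measure_display) (X : measurableType dX)
  (Y : finType) (f : X -> Y -> R) (n : nat)
  (x : 'I_n.+1 -> T -> X) (y : 'I_n.+1 -> T -> Y) (S : 'I_n -> T -> {set Y})
  (eps : R) :
  prob_classifier f ->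
  (forall c : Y, measurable_fun setT (fun z : X => f z c)) ->
  (forall i, measurable_fun setT (x i)) ->
  (forall i (c : Y), measurable [set w | y i w = c]) ->
  (forall j (A : {set Y}), measurable [set w | S j w = A]) ->
  (forall j w, y (widen_ord (leqnSn n) j) w \in S j w) ->
  exchangeable P x y ->
  (forall j, {ae P, forall w,
     #|S j w|%:R^-1 <= f (x (widen_ord (leqnSn n) j) w)
                         (y (widen_ord (leqnSn n) j) w)}) ->
  0 < eps <= 1 ->
  ((1 - eps)%:E <=
   P [set w | y ord_max w \in
        conformal_set f (x ord_max w) (E_mean f (fun i => x i w) (S^~ w)) eps])%E.
Proof.
move=> [f0 f1] mf mx my mS yS exch hae /andP[eps0 eps1].
have sizeE : forall w, size (E_mean f (fun i => x i w) (S^~ w)) = n.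
  by move=> w; rewrite /E_mean size_map size_enum_ord.
set k := Num.ceil ((1 + n%:R) * (1 - eps)).
have hk : (1 + n%:R) * (1 - eps) <= k%:~R := ceil_ge _.
have crit : forall w, critical_score (E_mean f (fun i => x i w) (S^~ w)) eps =
   if k <= 0 then -oo%E else if (n < `|k|)%N then +oo%E
   else (nth 0 (sort <=%R (E_mean f (fun i => x i w) (S^~ w))) `|k|.-1)%:E.
  by move=> w; rewrite /critical_score sizeE.
have [k0|k0] := leP k 0.
  have : 1 - eps <= 0.
    have : (k%:~R : R) <= 0 by rewrite -(ler_int R) in k0.
    have : (0 : R) <= n%:R by [].
    nra.
  move=> h; apply: le_trans (measure_ge0 _ _); by rewrite lee_fin.
have [nk|nk] := ltnP n `|k|.
  rewrite (_ : [set w | _] = setT); first by rewrite probability_setT lee_fin; lra.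
  apply/seteqP; split => w // _ /=.
  by rewrite /conformal_set inE crit (lt_geF k0) nk /= leNye.
set K := `|k|%N.
have K0 : (0 < K)%N by rewrite absz_gt0 gt_eqF.
have hKk : (K%:R : R) = k%:~R by rewrite natr_absz gtr0_norm.
pose s := fun (l : 'I_n.+1) w => 1 - f (x l w) (y l w).
pose Ej := fun (j : 'I_n) w => 1 - (\sum_(c in S j w) f (x (widen_ord (leqnSn n) j) w) c) / #|S j w|%:R.
pose Ev := [set w | (count (fun j => (Ej j w < s ord_max w)%R) (enum 'I_n) < K)%N].
have key : forall w, (y ord_max w \in conformal_set f (x ord_max w) (E_mean f (fun i => x i w) (S^~ w)) eps)
     = (count (fun j => (Ej j w < s ord_max w)%R) (enum 'I_n) < K)%N.
  move=> w; rewrite /conformal_set inE crit (lt_geF k0) ltnNge nk /= -EFinB lee_fin -/K.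
  rewrite sw1.
  by rewrite os_count ?sizeE ?K0 ?nk //= /E_mean count_map.
have EvE : [set w | y ord_max w \in conformal_set f (x ord_max w) (E_mean f (fun i => x i w) (S^~ w)) eps] = Ev.
  by apply/seteqP; split => w /=; rewrite key.
have mxp : forall l B, measurable B -> measurable (x l @^-1` B).
  by move=> l B mB; have := mx l measurableT B mB; rewrite setTI.
have ms : forall l, measurable_fun setT (s l).
  move=> l; apply: (comp_meas (x l) (y l) (fun z c => 1 - f z c)) => //.
  - exact: mxp.
  - move=> c; apply: (measurable_funB (f := cst 1) (g := fun z => f z c)) => //; exact: measurable_cst.
have mE : forall j, measurable_fun setT (Ej j).
  move=> j; apply: (comp_meas (x (widen_ord (leqnSn n) j)) (S j)
     (fun z A => 1 - (\sum_(c in A) f z c) / #|A|%:R)) => //.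
  - exact: mxp.
  - move=> A; apply: (measurable_funB (f := cst 1) (g := fun z => (\sum_(c in A) f z c) / #|A|%:R)); first exact: measurable_cst.
    apply: (measurable_funM (f := fun z => \sum_(c in A) f z c) (g := cst (#|A|%:R^-1))); last exact: measurable_cst.
    rewrite (_ : (fun z => _) = (fun z => \sum_(c <- enum A) f z c)); last by apply/funext => z; rewrite big_enum.
    by apply: measurable_sum => c; exact: mf.
have mEv : measurable Ev.
  apply: (bool_comb_meas (fun j w => (Ej j w < s ord_max w)%R) (fun p => (count p (enum 'I_n) < K)%N)).
  move=> j; exact: ltr_meas.
have [N [mN PN0 hN]] : exists N, [/\ measurable N, P N = 0 & forall w, ~ N w -> forall j,
     #|S j w|%:R^-1 <= f (x (widen_ord (leqnSn n) j) w) (y (widen_ord (leqnSn n) j) w)].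
  have := filter_forall _ hae.
  move=> [N [mN PN0 hN]]; exists N; split => // w nNw.
  case: (pselect (forall j, #|S j w|%:R^-1 <= f (x (widen_ord (leqnSn n) j) w) (y (widen_ord (leqnSn n) j) w))) => // h.
  by case: nNw; apply: hN.
pose B := fun i : 'I_n.+1 => [set w | (count (fun l => (s l w < s i w)%R) (enum 'I_n.+1) < K)%N].
have mB : forall i, measurable (B i).
  move=> i; apply: (bool_comb_meas (fun l w => (s l w < s i w)%R) (fun p => (count p (enum 'I_n.+1) < K)%N)).
  move=> l; exact: ltr_meas.
have sub : B ord_max `<=` Ev `|` N.
  move=> w Bw; case: (pselect (N w)) => [Nw|nNw]; [by right|left].
  have hQ := hN w nNw.
  rewrite /Ev /=; apply: leq_ltn_trans Bw.
  rewrite !count_sum big_ord_recr /= ltxx addn0; apply: leq_sum => j _.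
  have h2 : s (widen_ord (leqnSn n) j) w <= Ej j w.
    rewrite /s /Ej; apply: mean_ge; [exact: f0 | exact: f1 | exact: yS | exact: hQ].
  case: ltP => // h1; by rewrite (le_lt_trans h2 h1).
have PB : (P (B ord_max) <= P Ev)%E.
  have mU : measurable (Ev `|` N) by exact: measurableU.
  apply: le_trans (le_measure P (mem_set (mB ord_max)) (mem_set mU) sub) _.
  have h := measureU2 P mEv mN.
  have E : (P Ev + P N)%E = P Ev by rewrite PN0 adde0.
  exact: (le_trans h (eq_ind _ (fun z => (z <= P Ev)%E) (lexx _) _ (esym E))).
have exB : forall i, P (B i) = P (B ord_max).
  move=> i.
  pose sc := fun p : X * Y => 1 - f p.1 p.2.
  pose A := [set z : 'I_n.+1 -> X * Y |
     (count (fun l => (sc (z l) < sc (z ord_max))%R) (enum 'I_n.+1) < K)%N].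
  have hA : <<s @cyl_sets _ X Y n.+1 >> A.
    pose z0 : 'I_n.+1 -> X * Y := fun l => (x l point, y l point).
    pose G : set (set (ptype _ z0)) := @cyl_sets _ X Y n.+1.
    have msc : forall l, measurable_fun setT (fun z : g_sigma_algebraType G => sc (z l)).
      move=> l; apply: (comp_meas (fun z : g_sigma_algebraType G => (z l).1)
          (fun z : g_sigma_algebraType G => (z l).2) (fun a c => 1 - f a c)).
      - move=> Bs mBs; apply: sub_gen_smallest; left; exists l, Bs; split => //.
      - move=> c; apply: sub_gen_smallest; right; exists l, c => //.
      - move=> c; apply: (measurable_funB (f := cst 1) (g := fun z => f z c)) => //; exact: measurable_cst.
    have : measurable (A : set (g_sigma_algebraType G)).
      apply: (bool_comb_meas (fun l (z : g_sigma_algebraType G) => (sc (z l) < sc (z ord_max))%R)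
         (fun p => (count p (enum 'I_n.+1) < K)%N)) => l.
      exact: ltr_meas.
    by [].
  have := exch (tperm i ord_max) A hA.
  have -> : [set w | A (fun l => (x l w, y l w))] = B ord_max by [].
  have E : forall w, count (fun l => (s (tperm i ord_max l) w < s (tperm i ord_max ord_max) w)%R) (enum 'I_n.+1)
      = count (fun l => (s l w < s i w)%R) (enum 'I_n.+1).
    move=> w; rewrite tpermR !count_sum.
    by rewrite [RHS](reindex_inj (@perm_inj _ (tperm i ord_max))).
  move=> <-; congr (P _); apply/seteqP; split => w /=.
  - move=> h; change ((count (fun l => (s (tperm i ord_max l) w < s (tperm i ord_max ord_max) w)%R) (enum 'I_n.+1) < K)%N).
    rewrite E; exact: h.
  - move=> h; change ((count (fun l => (s l w < s i w)%R) (enum 'I_n.+1) < K)%N).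
    rewrite -E; exact: h.
have mI : forall i, measurable_fun setT (fun w => (\1_(B i) w : R)%:E).
  by move=> i; apply/measurable_EFinP; exact: measurable_indic.
have hsum : ((K%:R : R)%:E <= \sum_(i < n.+1) P (B i))%E.
  have -> : (\sum_(i < n.+1) P (B i) = \int[P]_(w in setT) \sum_(i < n.+1) (\1_(B i) w : R)%:E)%E.
    have f0' : forall i w, setT w -> (0 <= (\1_(B i) w : R)%:E)%E.
      by move=> i w _; rewrite lee_fin indicE ler0n.
    rewrite (@ge0_integral_sum _ _ _ P setT measurableT _ (fun i w => (\1_(B i) w : R)%:E) mI f0').
    by apply: eq_bigr => i _; rewrite integral_indic // setIT.
  apply: (@le_trans _ _ (\int[P]_(w in setT) ((K%:R : R)%:E))%E).
    rewrite integral_cst //; suff -> : ((P : {measure set T -> \bar R}) setT = 1)%E by rewrite mule1.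
    exact: probability_setT.
  apply: ge0_le_integral.
  - exact: measurableT.
  - by move=> w _; rewrite lee_fin.
  - exact: measurable_cst.
  - by apply: emeasurable_sum => i; exact: mI.
  move=> w _; rewrite sumEFin lee_fin.
  under eq_bigr do rewrite indicE.
  rewrite -natr_sum ler_nat.
  pose L := [seq s l w | l <- enum 'I_n.+1].
  have szL : size L = n.+1 by rewrite size_map size_enum_ord.
  have := @os_count_ge R L K; rewrite szL K0 /= (leq_trans nk (leqnSn n)) => /(_ isT).
  set q := nth 0 _ _.
  rewrite count_map count_sum => h; apply: (leq_trans h); apply: leq_sum => i _.
  have -> : (w \in B i) = (s i w <= q).
    rewrite /q os_count ?szL ?K0 ?(leq_trans nk (leqnSn n)) // count_map.
    by apply/idP/idP => [/set_mem|/mem_set].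
  by [].
have hp : P (B ord_max) = (fine (P (B ord_max)))%:E by rewrite fineK // fin_num_measure.
set p := fine _ in hp.
have hpK : (K%:R : R) <= p *+ n.+1.
  move: hsum; under eq_bigr do rewrite exB hp.
  by rewrite sumEFin lee_fin sumr_const card_ord.
rewrite EvE; apply: le_trans PB; rewrite hp lee_fin.
rewrite mulrS -mulr_natr hKk in hpK.
have : (0 : R) <= n%:R by [].
nra.
Qed.
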